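(* Let $n\ge5$ and $c\ge1$. The symmetric group $S_n$ is a quotient of $UW_n(c)$. Moreover, every non-abelian finite quotient $G$ of $UW_n(c)$ satisfies $|G|\ge n!$, and if $|G|=n!$ then $G\cong S_n$; for $n\neq 6$, $S_n$ is the unique (up to isomorphism) quotient of order $n!$, while for $n=6$ there are also the quotients obtained by composing with the exceptional outer automorphism of $S_6$.
   Context: $UV_n(c)$ ($n\ge2$, $c\ge1$) is the group with generators $\rho_i$ ($1\le i\le n-1$), $\sigma_{i,t}$ ($1\le i\le n-1$, $1\le t\le c$) and relations $\rho_i\rho_{i+1}\rho_i=\rho_{i+1}\rho_i\rho_{i+1}$ ($1\le i\le n-2$), $\rho_i\rho_j=\rho_j\rho_i$ ($|i-j|\ge2$), $\rho_i^2=1$, $\sigma_{i,t}\sigma_{j,\ell}=\sigma_{j,\ell}\sigma_{i,t}$ ($|i-j|\ge2$, $1\le t,\ell\le c$), $\sigma_{i,t}\rho_j=\rho_j\sigma_{i,t}$ ($|i-j|\ge2$), $\rho_i\rho_{i+1}\sigma_{i,t}=\sigma_{i+1,t}\rho_i\rho_{i+1}$ ($1\le i\le n-2$, $1\le t\le c$). The universal welded braid group $UW_n(c)$ is the quotient of $UV_n(c)$ by the additional relations $\rho_i\sigma_{i+1,t}\sigma_{i,t}=\sigma_{i+1,t}\sigma_{i,t}\rho_{i+1}$ for all $1\le i\le n-2$, $1\le t\le c$. A quotient of a group means the image of a surjective homomorphism. *)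

(* Defs.v *)
From mathcomp Require Import all_boot all_fingroup.
Set Implicit Arguments. Unset Strict Implicit. Unset Printing Implicit Defensive.
Local Open Scope group_scope.

Definition far (i j : nat) : bool := (i.+2 <= j)%N || (j.+2 <= i)%N.

(* The defining relations of UW_n(c), evaluated at elements
   r i  (image of rho_i,       1 <= i <= n-1) and
   s i t (image of sigma_{i,t}, 1 <= i <= n-1, 1 <= t <= c)
   of a group gT.  Values of r, s outside these index ranges are irrelevant. *)
Definition UW_rels (gT : finGroupType) (n c : nat)
    (r : nat -> gT) (s : nat -> nat -> gT) : Prop :=
  (forall i, (1 <= i <= n - 2)%N -> r i * r i.+1 * r i = r i.+1 * r i * r i.+1) /\
      (forall i j, (1 <= i <= n - 1)%N -> (1 <= j <= n - 1)%N -> far i j ->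
         r i * r j = r j * r i) /\
      (forall i, (1 <= i <= n - 1)%N -> r i * r i = 1) /\
      (forall i j t l, (1 <= i <= n - 1)%N -> (1 <= j <= n - 1)%N ->
         (1 <= t <= c)%N -> (1 <= l <= c)%N -> far i j ->
         s i t * s j l = s j l * s i t) /\
      (forall i j t, (1 <= i <= n - 1)%N -> (1 <= j <= n - 1)%N ->
         (1 <= t <= c)%N -> far i j -> s i t * r j = r j * s i t) /\
      (forall i t, (1 <= i <= n - 2)%N -> (1 <= t <= c)%N ->
         r i * r i.+1 * s i t = s i.+1 t * r i * r i.+1) /\
      (forall i t, (1 <= i <= n - 2)%N -> (1 <= t <= c)%N ->
         r i * s i.+1 t * s i t = s i.+1 t * s i t * r i.+1).

Definition UW_gens (gT : finGroupType) (n c : nat)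
    (r : nat -> gT) (s : nat -> nat -> gT) : {set gT} :=
  [set r (val i) | i : 'I_n & (0 < val i)%N]
  :|: [set s (val p.1) (val p.2) | p : 'I_n * 'I_c.+1
                                  & (0 < val p.1)%N && (0 < val p.2)%N].

(* G is a quotient of UW_n(c), i.e. the image of a surjective homomorphism
   UW_n(c) -> G.  By the universal property of the presentation, this is
   the same as a choice of images of the generators in G satisfying the
   defining relations and generating G. *)
Definition UW_quotient (gT : finGroupType) (G : {set gT}) (n c : nat) : Prop :=
  exists (r : nat -> gT) (s : nat -> nat -> gT),
    UW_rels n c r s /\ G = <<UW_gens n c r s>>.

(* Main.v *)
Require Import Defs.
From mathcomp Require Import all_boot all_fingroup all_solvable zify.
Set Implicit Arguments. Unset Strict Implicit. Unset Printing Implicit Defensive.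
Local Open Scope group_scope.


Section Cox.
Variable gT : finGroupType.

Definition cox (M : nat) (g : nat -> gT) : Prop :=
  (forall i, (1 <= i)%N -> (i < M)%N -> g i * g i.+1 * g i = g i.+1 * g i * g i.+1) /\
  (forall i j, (1 <= i <= M)%N -> (1 <= j <= M)%N -> far i j -> g i * g j = g j * g i) /\
  (forall i, (1 <= i <= M)%N -> g i * g i = 1).

Definition cgens (M : nat) (g : nat -> gT) : {set gT} :=
  [set g (val i) | i : 'I_M.+1 & (0 < val i)%N].

Fixpoint ee (g : nat -> gT) (M k : nat) : gT :=
  match k with 0 => 1 | k'.+1 => ee g M k' * g (M - k')%N end.

Lemma cox_le M M' g : (M' <= M)%N -> cox M g -> cox M' g.
Proof.
move=> le [h1 [h2 h3]]; split; [|split].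
- move=> i ? ?; apply: h1 => //; lia.
- move=> i j ? ? ?; apply: h2 => //; lia.
- move=> i ?; apply: h3; lia.
Qed.

Lemma eeL1 M g : cox M g -> forall k i, (1 <= i)%N -> (i + k < M)%N ->
  ee g M k * g i = g i * ee g M k.
Proof.
move=> [h1 [h2 h3]]; elim=> [|k IH] i i1 ik /=; first by rewrite mul1g mulg1.
rewrite -mulgA (h2 (M - k) i); first last.
- rewrite /far; lia.
- apply/andP; split; lia.
- apply/andP; split; lia.
by rewrite mulgA (IH i) ?mulgA //; lia.
Qed.

Lemma eeL2 M g : cox M g -> forall k i, (k <= M)%N -> (M - k + 2 <= i <= M)%N ->
  ee g M k * g i = g i.-1 * ee g M k.
Proof.
move=> hc; have [h1 [h2 h3]] := hc.
elim=> [|k IH] i kM /andP [ia iM] /=; first lia.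
have [ei|ni] := eqVneq i (M - k).+1.
  case: k IH kM ia ei => [|k] IH kM ia ei; first lia.
  rewrite /=.
  have -> : (M - k.+1 = i.-1)%N by lia.
  have -> : (M - k = i)%N by lia.
  rewrite -!mulgA (mulgA (g i)).
  have -> : g i * g i.-1 * g i = g i.-1 * g i * g i.-1.
    have H := h1 i.-1; rewrite prednK in H; last lia.
    symmetry; apply: H; lia.
  by rewrite !mulgA (eeL1 hc) //; lia.
rewrite -mulgA (h2 (M - k) i); first last.
- rewrite /far; lia.
- apply/andP; split; lia.
- apply/andP; split; lia.
by rewrite mulgA (IH i) ?mulgA //; try lia; apply/andP; split; lia.
Qed.


End Cox.

Lemma g_in_gen (gT : finGroupType) M (g : nat -> gT) j : (1 <= j <= M)%N -> g j \in <<cgens M g>>.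
Proof.
move=> /andP [j1 jM]; apply: mem_gen; apply/imsetP.
have jlt : (j < M.+1)%N by lia.
by exists (Ordinal jlt); rewrite // inE.
Qed.

Lemma cox_bound (gT : finGroupType) M (g : nat -> gT) : cox M g -> (#|<<cgens M g>>| <= M.+1`!)%N.
Proof.
elim: M => [|M IH] hc.
  have -> : cgens 0 g = set0.
    apply/setP => x; rewrite inE; apply/negbTE/negP => /imsetP [[i hi]].
    by rewrite inE /=; case: i hi.
  by rewrite gen0 cards1.
have hc' : cox M g by apply: cox_le hc.
have [h1 [h2 h3]] := hc.
set K' := <<cgens M g>>.
pose N := M.+1.
pose U := [set p.1 * ee g N (val p.2) | p in setX K' [set: 'I_N.+1]].
have inU : forall y k, y \in K' -> (k <= N)%N -> y * ee g N k \in U.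
  move=> y k yK kN; apply/imsetP.
  have klt : (k < N.+1)%N by lia.
  by exists (y, Ordinal klt); rewrite // in_setX yK inE.
have closU : forall x i, x \in U -> (1 <= i <= N)%N -> x * g i \in U.
  move=> x i /imsetP [[y [k klt]]]; rewrite in_setX inE andbT /= => yK -> /andP [i1 iN].
  have kN : (k <= N)%N by lia.
  have [c1|c2] := ltnP (i + k) N.
    rewrite -mulgA (eeL1 hc) // mulgA; apply: inU => //.
    by rewrite groupM // g_in_gen //; lia.
  have [c3|c4] := eqVneq (i + k) N.
    have -> : g i = g (N - k) by congr g; lia.
    rewrite -mulgA.
    have -> : ee g N k * g (N - k) = ee g N k.+1 by [].
    by apply: inU => //; lia.
  have [c5|c6] := eqVneq (i + k) N.+1.
    case: k klt kN c2 c4 c5 => [|k] klt kN c2 c4 c5; first lia.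
    have -> : ee g N k.+1 = ee g N k * g i by rewrite /=; congr (_ * g _); lia.
    rewrite -!mulgA h3 ?mulg1; last lia.
    by apply: inU => //; lia.
  rewrite -mulgA (eeL2 hc); last (apply/andP; split; lia); last lia.
  rewrite mulgA; apply: inU => //.
  by rewrite groupM // g_in_gen //; lia.
have sub : <<cgens N g>> \subset U.
  apply/subsetP => x /gen_prodgP [l [c hc2 ->]].
  elim: l c hc2 => [|l IHl] c hc2.
    by rewrite big_ord0; have := inU 1 0 (group1 _) (leq0n _); rewrite /= mulg1.
  rewrite big_ord_recr /=.
  have /imsetP [[j jlt]] := hc2 ord_max; rewrite inE /= => j0 ->.
  apply: closU; last lia.
  by apply: IHl => i; apply: hc2.
apply: leq_trans (subset_leq_card sub) _.
apply: leq_trans (leq_imset_card _ _) _.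
rewrite cardsX cardsT card_ord factS.
have hK := IH hc'; rewrite -/K' in hK; nia.
Qed.

Lemma tperm_conj (T : finType) (a b : T) (x : {perm T}) :
  tperm a b * x * tperm a b = x ^ tperm a b.
Proof. by rewrite conjgE tpermV mulgA. Qed.

Lemma tperm_braid (T : finType) (a b c : T) : a != b -> b != c -> a != c ->
  tperm a b * tperm b c * tperm a b = tperm b c * tperm a b * tperm b c.
Proof.
move=> ab bc ac; rewrite !tperm_conj !tpermJ tpermL tpermR.
rewrite (tpermD (x := a) (y := b) (z := c)) ?(eq_sym c) //.
by rewrite (tpermD (x := b) (y := c) (z := a)) ?(eq_sym a) // eq_sym.
Qed.

Lemma tperm_comm (T : finType) (a b c d : T) :
  a != c -> a != d -> b != c -> b != d ->
  tperm a b * tperm c d = tperm c d * tperm a b.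
Proof.
move=> ac ad bc bd.
have h : tperm a b * tperm c d * tperm a b = tperm c d.
  by rewrite tperm_conj tpermJ !tpermD // eq_sym.
by rewrite -{2}h -!mulgA tperm2 mulg1.
Qed.

Definition sr (m i : nat) : 'S_m.+1 := tperm (inord i.-1) (inord i).

Lemma inord_eq m a b : (a <= m)%N -> (b <= m)%N ->
  (inord a == inord b :> 'I_m.+1) = (a == b).
Proof. by move=> am bm; rewrite -val_eqE /= !inordK. Qed.

Lemma sr_cox m : cox m (sr m).
Proof.
split; [|split].
- move=> i i1 im; rewrite /sr /=.
  by apply: tperm_braid; rewrite inord_eq //; lia.
- move=> i j /andP [i1 im] /andP [j1 jm] fij; rewrite /sr.
  by apply: tperm_comm; rewrite inord_eq //; move: fij; rewrite /far; lia.
- by move=> i _; rewrite /sr tperm2.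
Qed.

Lemma sr_gen m : (1 <= m)%N -> <<cgens m (sr m)>> = [set: 'S_m.+1].
Proof.
move=> m1; apply/eqP; rewrite eqEsubset subsetT /=.
rewrite -(gen_tperm (inord 0)) gen_subG; apply/subsetP => x /imsetP [y _ ->].
rewrite -(inord_val y).
move: (ltn_ord y); rewrite ltnS.
elim: (nat_of_ord y) => [|k IH] hk.
  by rewrite tperm1 group1.
case: k IH hk => [|k] IH hk.
  by have := g_in_gen (sr m) (j := 1); rewrite /sr /=; apply; lia.
have eq1 : tperm (inord 0) (inord k.+2) = (tperm (inord 0) (inord k.+1)) ^ (sr m k.+2)
  :> 'S_m.+1.
  by rewrite tpermJ /sr /= tpermL tpermD //; rewrite inord_eq //; lia.
rewrite eq1 groupJ //; first by apply: IH; lia.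
by apply: g_in_gen; lia.
Qed.

Lemma normal_trivAlt (T : finType) (N : {group {perm T}}) :
  (2 < #|T|)%N -> N <| [set: {perm T}] -> 'Alt_T :&: N = 1 -> N :=: 1.
Proof.
move=> T3 nN tI; apply/trivgP; apply/subsetP => k kN; rewrite inE.
apply/eqP/permP => x; rewrite perm1; apply/eqP/negPn/negP => kx.
have [z zP] : exists z, z \notin [set x; k x].
  apply/existsP; rewrite -negb_forall; apply/negP => /forallP allin.
  have : (#|T| <= #|[set x; k x]|)%N.
    by rewrite -cardsT; apply: subset_leq_card; apply/subsetP => y _; apply: allin.
  rewrite cards2; lia.
move: zP; rewrite !inE negb_or => /andP [zx zkx].
set t := tperm x z.
have tN : t \in 'N(N) by apply: (subsetP (normal_norm nN)); rewrite inE.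
have cI : k^-1 * k ^ t \in 'Alt_T :&: N.
  rewrite inE Alt_even odd_permM odd_permV odd_permJ addbb /=.
  by rewrite groupM ?groupV // memJ_norm.
have ekt : k ^ t = k.
  move: cI; rewrite tI inE => /eqP h; apply/eqP; rewrite eq_sym eq_mulVg1 h //.
have := permJ k t x; rewrite ekt /t tpermL (tpermD (x := x) (y := z)) //; last first.
  by rewrite eq_sym.
by move/perm_inj/eqP; rewrite (negbTE zx).
Qed.

Section PartB.
Variables (gT : finGroupType) (m c : nat) (r : nat -> gT) (s : nat -> nat -> gT).
Hypothesis hm : (4 <= m)%N.
Hypothesis rels : UW_rels m.+1 c r s.

Lemma rels_cox : cox m r.
Proof.
case: rels => [h1 [h2 [h3 _]]]; split; [|split].
- move=> i i1 im; apply: h1; lia.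
- move=> i j hi hj f; apply: h2 => //; lia.
- move=> i hi; apply: h3; lia.
Qed.

Lemma abel_of_eq : (forall i, (1 <= i <= m)%N -> r i = r 1) ->
  abelian <<UW_gens m.+1 c r s>>.
Proof.
move=> req; case: rels => [_ [_ [h3 [h4 [h5 [h6 _]]]]]].
set a := r 1.
have a2 : a * a = 1 by apply: h3; lia.
have sq : forall i t, (1 <= i <= m)%N -> (1 <= t <= c)%N -> s i t = s 1 t.
  elim => [|i IH] t hi ht; first lia.
  case: i IH hi => [|i] IH hi; first done.
  have := h6 i.+1 t; rewrite (req i.+1) ?(req i.+2); try lia.
  rewrite a2 mul1g -mulgA a2 mulg1 => e; rewrite -e //; last lia.
  by apply: IH; lia.
have gP : forall x, x \in UW_gens m.+1 c r s ->
    x = a \/ exists t, (1 <= t <= c)%N /\ x = s 1 t.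
  move=> x; rewrite in_setU => /orP [] /imsetP.
    by move=> [[i hi]]; rewrite inE /= => i0 ->; left; apply: req; lia.
  move=> [[[i hi] [t ht]]]; rewrite inE /= => /andP [i0 t0] ->; right; exists t.
  split; first lia.
  by apply: sq; lia.
have as1 : forall t, (1 <= t <= c)%N -> commute a (s 1 t).
  move=> t ht; rewrite /commute /a -(req 3); last lia.
  by symmetry; apply: h5 => //; lia.
have ss : forall t l, (1 <= t <= c)%N -> (1 <= l <= c)%N -> commute (s 1 t) (s 1 l).
  move=> t l ht hl; rewrite /commute -(sq 3 l); [|lia|lia].
  by apply: h4 => //; lia.
rewrite abelian_gen; apply/centsP => x xA y yA.
case: (gP x xA) => [->|[t [ht ->]]]; case: (gP y yA) => [->|[l [hl ->]]].
- exact: commute_refl.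
- by apply: as1.
- by apply/commute_sym; apply: as1.
- by apply: ss.
Qed.

Lemma partB : ~~ abelian <<UW_gens m.+1 c r s>> ->
  (m.+1`! <= #|<<UW_gens m.+1 c r s>>|)%N /\
  (#|<<UW_gens m.+1 c r s>>| = m.+1`! ->
     <<UW_gens m.+1 c r s>> \isog [set: 'S_m.+1]).
Proof.
move=> nab.
pose gw i : ('S_m.+1 * gT)%type := (sr m i, r i).
have pM : forall (x x' : 'S_m.+1) (y y' : gT), (x, y) * (x', y') = (x * x', y * y').
  by [].
have cw : cox m gw.
  have [a1 [a2 a3]] := sr_cox m; have [b1 [b2 b3]] := rels_cox.
  split; [|split].
  - by move=> i i1 im; rewrite /gw !pM (a1 i) // (b1 i).
  - by move=> i j hi hj f; rewrite /gw !pM (a2 i j) // (b2 i j).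
  - by move=> i hi; rewrite /gw !pM (a3 i) // (b3 i).
have hW : (#|<<cgens m gw>>| <= m.+1`!)%N by apply: cox_bound.
pose W := <<cgens m gw>>%G.
pose f1 := restrm (subsetT W) (@fst_morphism 'S_m.+1 gT).
pose f2 := restrm (subsetT W) (@snd_morphism 'S_m.+1 gT).
have im1 : f1 @* W = [set: 'S_m.+1].
  rewrite morphim_restrm setIid morphim_gen ?subsetT // morphimEsub ?subsetT //.
  rewrite -(sr_gen (m := m)); last lia.
  by congr <<_>>; rewrite /cgens -imset_comp; apply: eq_imset.
have im2 : f2 @* W = <<cgens m r>>.
  rewrite morphim_restrm setIid morphim_gen ?subsetT // morphimEsub ?subsetT //.
  by congr <<_>>; rewrite /cgens -imset_comp; apply: eq_imset.
have cW : #|W| = m.+1`!.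
  apply/eqP; rewrite eqn_leq hW /=.
  by have := leq_morphim f1 W; rewrite im1 cardsT card_Sn.
have inj1 : 'injm f1.
  by rewrite -card_im_injm im1 cardsT card_Sn cW.
have kW : 'ker f2 \subset W by apply/subsetP => x; apply: dom_ker.
pose N := (f1 @* 'ker f2)%G.
have nN : N <| [set: 'S_m.+1] by rewrite -im1; apply: morphim_normal; apply: ker_normal.
have nAN : 'Alt_('I_m.+1) :&: N <| 'Alt_('I_m.+1) by apply: normalGI (subsetT _) nN.
have sA : simple 'Alt_('I_m.+1) by apply: simple_Alt5; rewrite card_ord; lia.
have HsubG : <<cgens m r>> \subset <<UW_gens m.+1 c r s>>.
  by apply: genS; apply: subsetUl.
case/simpleP: sA => _ /(_ _ nAN) [AN1|ANA].
  have N1 : N :=: 1 by apply: normal_trivAlt => //; rewrite card_ord; lia.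
  have kerf2 : 'ker f2 = 1.
    by apply/eqP; rewrite -(morphim_injm_eq1 inj1 kW); apply/eqP.
  have inj2 : 'injm f2 by rewrite kerf2 subxx.
  have cardH : #|<<cgens m r>>| = m.+1`! by rewrite -im2 card_injm.
  split; first by rewrite -cardH subset_leq_card.
  move=> cardG.
  have eGH : <<UW_gens m.+1 c r s>> = <<cgens m r>>.
    by apply/eqP; rewrite eq_sym eqEcard HsubG cardG cardH leqnn.
  rewrite eGH -im2 -im1.
  apply: isog_trans (sub_isog (subxx _) inj1).
  by rewrite isog_sym; apply: sub_isog.
exfalso; move/negP: nab; apply.
have [b1 [b2 b3]] := rels_cox.
have step : forall i, (1 <= i < m)%N -> r i = r i.+1.
  move=> i hi.
  have pA : sr m i * sr m i.+1 \in 'Alt_('I_m.+1).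
    rewrite Alt_even odd_permM !odd_tperm !inord_eq //; try lia.
  have : sr m i * sr m i.+1 \in N by move: pA; rewrite -ANA inE => /andP [].
  case/morphimP => w wW wk ew.
  have gW : gw i * gw i.+1 \in W by rewrite groupM // g_in_gen //; lia.
  have ew2 : w = gw i * gw i.+1 by apply: (injmP inj1) => //.
  have w2 : w.2 = 1 by have := mker wk.
  move: w2; rewrite ew2 /= => h.
  by rewrite -[r i]mulg1 -(b3 i.+1) ?mulgA ?h ?mul1g //; lia.
have all1 : forall i, (1 <= i <= m)%N -> r i = r 1.
  elim => [|i IH] hi; first lia.
  case: i IH hi => [|i] IH hi; first done.
  by rewrite -step ?IH //; lia.
exact: abel_of_eq.
Qed.

End PartB.

Theorem theorem5p12 (n c : nat) (hn : (5 <= n)%N) (hc : (1 <= c)%N) :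
  UW_quotient [set: 'S_n] n c /\
  (forall (gT : finGroupType) (G : {group gT}),
      UW_quotient G n c -> ~~ abelian G ->
      (n`! <= #|G|)%N /\ (#|G| = n`! -> G \isog [set: 'S_n])).
Proof.
case: n hn => [|m] hn //.
have hm : (4 <= m)%N by lia.
split.
  exists (sr m), (fun i _ => sr m i); split.
    have [a1 [a2 a3]] := sr_cox m.
    split; [|split; [|split; [|split; [|split; [|split]]]]].
    - by move=> i hi; apply: a1; lia.
    - by move=> i j hi hj f; apply: a2 => //; lia.
    - by move=> i hi; apply: a3; lia.
    - by move=> i j t l hi hj ht hl f; apply: a2 => //; lia.
    - by move=> i j t hi hj ht f; apply: a2 => //; lia.
    - by move=> i t hi ht; apply: a1; lia.
    - by move=> i t hi ht; apply: a1; lia.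
  apply/eqP; rewrite eqEsubset subsetT /= -(sr_gen (m := m)); last lia.
  by rewrite andbT; apply: genS; apply: subsetUl.
move=> gT G [r [s [rels eG]]] nab.
rewrite eG in nab *.
exact: partB.
Qed.
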